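(* Let $R$ be a commutative ring and $n\ge3$. Let $v,w_1,w_2\in R^n$ with $q(v,w_1)=q(v,w_2)=1$. Then $(v,w_1)$ and $(v,w_2)$ lie in the same $EO_{2n}(R)$-orbit and in the same $\operatorname{Epin}_{2n}(R)$-orbit of $H(R^n)$.
   Context: $H(R^n)=R^n\oplus(R^n)^*$ (elements written as pairs $(v,w)$ of row vectors) with quadratic form $q(v,w)=v\cdot w^{\intercal}$ and standard basis $e_1,\dots,e_n,f_1,\dots,f_n$. Let $\partial=(1\ n+1)\cdots(n\ 2n)$ and $E^o_{ij}(\lambda)=I_{2n}+\lambda(e_{ij}-e_{\partial(j)\partial(i)})$ for $1\le i\ne j\le 2n$, $\lambda\in R$; $EO_{2n}(R)$ is the group they generate, acting on $H(R^n)$ via matrices in the ordered basis $(e_1,\dots,e_n,f_1,\dots,f_n)$ (the group is closed under transposition, so row/column conventions give the same orbits). $\mathrm{Cl}=\mathrm{Cl}_0\oplus\mathrm{Cl}_1$ is the Clifford algebra of $(H(R^n),q)$, $x\mapsto x^*$ its canonical involution (identity on $H(R^n)$). $\operatorname{Spin}_{2n}(R)=\{x\in\mathrm{Cl}_0: xx^*=1,\ xH(R^n)x^{-1}=H(R^n)\}$, acting on $H(R^n)$ by $\pi(g)(u)=gug^{-1}$, and $\operatorname{Epin}_{2n}(R)=\pi^{-1}(EO_{2n}(R))$. *)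

(* Defs.v *)
From HB Require Import structures.
From mathcomp Require Import all_boot all_order all_algebra.
Set Implicit Arguments. Unset Strict Implicit. Unset Printing Implicit Defensive.
Import Order.TTheory GRing.Theory Num.Theory.
Local Open Scope ring_scope.

Section Hyperbolic.
Variables (R : comPzRingType) (n : nat).

(* H(R^n) = R^n (+) (R^n)^*, an element (v,w) is the row vector row_mx v w,
   written in the ordered basis e_1..e_n,f_1..f_n (indices 'I_(n+n)). *)
Definition hyp := 'rV[R]_(n + n).

Definition qform (h : hyp) : R := (lsubmx h *m (rsubmx h)^T) 0 0.

Definition dd (k : 'I_(n + n)) : 'I_(n + n) :=
  match split k with
  | inl i => rshift n i
  | inr i => lshift n i
  end.

Definition EOgen (i j : 'I_(n + n)) (l : R) : 'M[R]_(n + n) :=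
  1%:M + l *: (delta_mx i j - delta_mx (dd j) (dd i)).

(* EO_{2n}(R): the group generated by the E^o_{ij}(lambda), i <> j.
   Since EOgen i j l * EOgen i j (-l) = 1, this is the monoid they generate. *)
Inductive EO : 'M[R]_(n + n) -> Prop :=
  | EO_one : EO 1%:M
  | EO_step g i j l : i != j -> EO g -> EO (g *m EOgen i j l).

Definition EO_orbit (h1 h2 : hyp) : Prop :=
  exists2 g, EO g & h2 = h1 *m g.

(* ---------- Clifford algebra of (H(R^n), q) ----------
   Chevalley's model: Cl = Lambda(H(R^n)) as an R-module, with basis the
   monomials x_S, S a subset of the basis indices 'I_(n+n) (x_k = e_{k+1} for
   k < n, x_{n+i} = f_{i+1}), and left Clifford multiplication by a basis
   vector x_k given by  x_k . y = x_k /\ y + iota^B_{x_k} y  for the bilinear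
   form B with B(f_i,e_i) = 1 and B = 0 on other pairs of basis vectors, so
   that B(u,u) = q(u).  With this choice the sorted wedge monomial x_S is the
   Clifford product x_{s1} ... x_{sm} (s1 < ... < sm). *)
Definition cl := {ffun {set 'I_(n + n)} -> R}.

Definition Bf (a b : 'I_(n + n)) : R :=
  match split a, split b with
  | inr i, inl j => (i == j)%:R
  | _, _ => 0
  end.

Definition sgnb (T : {set 'I_(n + n)}) (k : 'I_(n + n)) : R :=
  (-1) ^+ #|[set s in T | (s < k)%N]|.

Definition clwedge (k : 'I_(n + n)) (y : cl) : cl :=
  [ffun T : {set 'I_(n + n)} => if k \in T then sgnb T k * y (T :\ k) else 0].

Definition clcontr (k : 'I_(n + n)) (y : cl) : cl :=
  [ffun T : {set 'I_(n + n)} => \sum_(b : 'I_(n + n) | b \notin T) sgnb T b * Bf k b * y (b |: T)].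

Definition clL (k : 'I_(n + n)) (y : cl) : cl :=
  [ffun T : {set 'I_(n + n)} => clwedge k y T + clcontr k y T].

Definition cl1 : cl := [ffun T : {set 'I_(n + n)} => (T == set0)%:R].

Definition clmul (x y : cl) : cl :=
  [ffun T : {set 'I_(n + n)} => \sum_(S : {set 'I_(n + n)}) x S * (foldr clL y (enum S)) T].

Definition clstar (x : cl) : cl :=
  [ffun T : {set 'I_(n + n)} => \sum_(S : {set 'I_(n + n)}) x S * (foldr clL cl1 (rev (enum S))) T].

Definition iota (h : hyp) : cl :=
  [ffun T : {set 'I_(n + n)} => \sum_(k : 'I_(n + n)) h 0 k * (T == [set k])%:R].

Definition cl_even (x : cl) : Prop := forall S : {set 'I_(n + n)}, odd #|S| -> x S = 0.

Definition cl_inverse (x y : cl) : Prop := clmul x y = cl1 /\ clmul y x = cl1.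

(* Spin_{2n}(R) together with a (two-sided) inverse xi of x *)
Definition spin_with_inv (x xi : cl) : Prop :=
  [/\ cl_even x, clmul x (clstar x) = cl1, cl_inverse x xi,
      (forall h, exists h', clmul (clmul x (iota h)) xi = iota h')
    & (forall h', exists h, clmul (clmul x (iota h)) xi = iota h')].

(* Epin_{2n}(R) = pi^{-1}(EO_{2n}(R)), pi(x)(u) = x u x^{-1} *)
Definition Epin_with_inv (x xi : cl) : Prop :=
  spin_with_inv x xi /\
  exists2 M, EO M & forall h, clmul (clmul x (iota h)) xi = iota (h *m M).

Definition Epin_orbit (h1 h2 : hyp) : Prop :=
  exists x xi, Epin_with_inv x xi /\ clmul (clmul x (iota h1)) xi = iota h2.

End Hyperbolic.

(* Main.v *)
Require Import Defs.
Set Warnings "-notation-overridden,-ambiguous-paths".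
From HB Require Import structures.
From mathcomp Require Import all_boot all_order all_algebra.
From mathcomp Require Import ring.
Import Order.TTheory GRing.Theory Num.Theory.
Local Open Scope ring_scope.
Set Implicit Arguments. Unset Strict Implicit. Unset Printing Implicit Defensive.


Lemma sorted_enum_ord m (A : {set 'I_m}) : sorted (fun x y : 'I_m => (x < y)%N) (enum A).
Proof.
have -> : enum A = filter (mem A) (enum 'I_m).
  by rewrite enumT.
apply: sorted_filter; first by move=> x y z /=; apply: ltn_trans.
have := iota_ltn_sorted 0 m; rewrite -val_enum_ord sorted_map; exact.
Qed.

Lemma enum_min m (t : 'I_m) (T : {set 'I_m}) : (forall s, s \in T -> (t < s)%N) ->
  enum (t |: T) = t :: enum T.
Proof.
move=> Ht; apply: (@irr_sorted_eq _ (fun x y : 'I_m => (x < y)%N)).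
- by move=> x y z /=; apply: ltn_trans.
- by move=> x /=; rewrite ltnn.
- exact: sorted_enum_ord.
- rewrite /= path_sortedE; last by move=> x y z /=; apply: ltn_trans.
  rewrite sorted_enum_ord andbT; apply/allP=> s; rewrite mem_enum; exact: Ht.
- by move=> x; rewrite in_cons !mem_enum in_setU1.
Qed.

Section Cliff.
Variables (R : comPzRingType) (n : nat).
Local Notation I := 'I_(n + n).
Local Notation cl := (cl R n).
Local Notation sg := (sgnb R).
Local Notation B := (Bf R).

Definition eps (a b : I) : R := if (a < b)%N then -1 else 1.

Lemma sgnbU1 (T : {set I}) a b : a \notin T -> sg (a |: T) b = eps a b * sg T b.
Proof.
move=> aT; rewrite /sgnb /eps.
case: ifP => ab.
  have -> : [set s in a |: T | (s < b)%N] = a |: [set s in T | (s < b)%N].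
    apply/setP=> s; rewrite !inE; case: (eqVneq s a) => [->|] //=; rewrite ?ab ?(negPf aT) //.
  by rewrite cardsU1 inE (negPf aT) /= add1n exprS.
have -> : [set s in a |: T | (s < b)%N] = [set s in T | (s < b)%N].
  apply/setP=> s; rewrite !inE; case: (eqVneq s a) => [->|] //=; rewrite ?ab ?(negPf aT) //.
by rewrite mul1r.
Qed.

Lemma sgnbD1 (T : {set I}) a b : a \in T -> sg (T :\ a) b = eps a b * sg T b.
Proof.
move=> aT; rewrite -{2}(setD1K aT) sgnbU1 ?setD11 // mulrA.
suff -> : eps a b * eps a b = 1 by rewrite mul1r.
by rewrite /eps; case: (a < b)%N; rewrite ?mulrNN mulr1.
Qed.

Lemma sg_sq (T : {set I}) (a : I) : sg T a * sg T a = 1.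
Proof. by rewrite /sgnb -exprD -signr_odd oddD addbb. Qed.

Lemma eps_swap (a b : I) : a != b -> eps a b + eps b a = 0.
Proof.
move=> ab; rewrite /eps; case: (ltngtP a b) => [h|h|h].
- by rewrite addNr.
- by rewrite subrr.
- by move: ab; rewrite (val_inj h) eqxx.
Qed.

Lemma eps_refl (a : I) : eps a a = 1.
Proof. by rewrite /eps ltnn. Qed.

Lemma Bf_refl (a : I) : B a a = 0.
Proof. by rewrite /Bf; case: (split a). Qed.

Lemma Bf_uniq (a c d : I) : c != d -> B a c * B a d = 0.
Proof.
move=> cd; rewrite /Bf; case: (split a) => i; first by rewrite mul0r.
case Ec: (split c) => [j|j]; last by rewrite mul0r.
case Ed: (split d) => [k|k]; last by rewrite mulr0.
case: (eqVneq i j) => [ij|]; last by rewrite mul0r.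
case: (eqVneq i k) => [ik|]; last by rewrite mulr0.
by move: cd; rewrite -(splitK c) -(splitK d) Ec Ed -ij -ik eqxx.
Qed.

Definition wp (a : I) (g : {set I} -> R) (T : {set I}) : R :=
  if a \in T then sg T a * g (T :\ a) else 0.
Definition cp (a : I) (g : {set I} -> R) (T : {set I}) : R :=
  \sum_(c : I) (if c \in T then 0 else sg T c * B a c * g (c |: T)).

Lemma clLE a (y : cl) T : clL a y T = wp a y T + cp a y T.
Proof.
rewrite /clL /clwedge /clcontr !ffunE /wp /cp; congr (_ + _).
by rewrite big_mkcond /=; apply: eq_bigr => c _; case: (c \in T).
Qed.

Lemma wpD a g1 g2 T : wp a (fun U => g1 U + g2 U) T = wp a g1 T + wp a g2 T.
Proof. by rewrite /wp; case: (a \in T); rewrite ?mulrDr ?addr0. Qed.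

Lemma cpD a g1 g2 T : cp a (fun U => g1 U + g2 U) T = cp a g1 T + cp a g2 T.
Proof.
rewrite /cp -big_split /=; apply: eq_bigr => c _.
by case: (c \in T); rewrite ?mulrDr ?addr0.
Qed.

Lemma wp_ext a g1 g2 T : g1 =1 g2 -> wp a g1 T = wp a g2 T.
Proof. by move=> e; rewrite /wp e. Qed.
Lemma cp_ext a g1 g2 T : g1 =1 g2 -> cp a g1 T = cp a g2 T.
Proof. by move=> e; rewrite /cp; apply: eq_bigr => c _; rewrite e. Qed.

Lemma clLLE a b (y : cl) T : clL a (clL b y) T =
  wp a (wp b y) T + wp a (cp b y) T + cp a (wp b y) T + cp a (cp b y) T.
Proof.
rewrite clLE (wp_ext _ _ (clLE b y)) (cp_ext _ _ (clLE b y)) wpD cpD.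
by rewrite !addrA.
Qed.

Lemma WW a b g T : wp a (wp b g) T + wp b (wp a g) T = 0.
Proof.
rewrite /wp; case: (eqVneq a b) => [<-|ab].
  by case: (a \in T); rewrite ?setD11 ?mulr0 ?addr0.
case aT: (a \in T); case bT: (b \in T); rewrite ?mulr0 ?addr0 ?add0r //;
  rewrite !in_setD1 ?aT ?bT ?andbT ?(eq_sym b a) ab ?mulr0 //=.
rewrite !sgnbD1 // (_ : T :\ b :\ a = T :\ a :\ b); last first.
  by apply/setP=> x; rewrite !in_setD1 !andbA (andbC (x != b)).
set G := g _.
transitivity ((eps a b + eps b a) * (sg T a * sg T b * G)); first by ring.
by rewrite eps_swap // mul0r.
Qed.
End Cliff.
Section More.
Variables (R : comPzRingType) (n : nat).
Local Notation I := 'I_(n + n).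
Local Notation cl := (cl R n).
Local Notation sg := (sgnb R).
Local Notation B := (Bf R).
Local Notation wp := (@wp R n).
Local Notation cp := (@cp R n).
Local Notation eps := (@eps R n).

Lemma setU1D1 (T : {set I}) c a : c != a -> (c |: T) :\ a = c |: (T :\ a).
Proof.
move=> ca; apply/setP=> x; rewrite !inE; case: (eqVneq x c) => [->|] //=.
by rewrite ca.
Qed.

Lemma WC a b g T : wp a (cp b g) T + cp b (wp a g) T = B b a * g T.
Proof.
rewrite /wp /cp; case aT: (a \in T).
  rewrite [X in sg T a * X](bigD1 a) //= [X in _ + X](bigD1 a) //=.
  rewrite aT add0r setD11 mulrDr -addrA sgnbD1 // eps_refl mul1r setD1K //.
  rewrite mulrA mulrA sg_sq mul1r.
  rewrite -[RHS]addr0; congr (_ + _).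
  rewrite mulr_sumr -big_split /=; apply: big1 => d da.
  rewrite in_setD1 da /=; case dT: (d \in T); first by rewrite mulr0 addr0.
  rewrite in_setU1 aT orbT sgnbD1 // sgnbU1 ?dT // setU1D1 //.
  transitivity ((eps a d + eps d a) * (sg T a * sg T d * B b d * g (d |: (T :\ a)))).
    by ring.
  by rewrite eps_swap ?mul0r // eq_sym.
rewrite add0r (bigD1 a) //= aT setU11 sgnbU1 ?aT // eps_refl mul1r.
rewrite setU1K ?aT // big1 ?addr0; last first.
  move=> c ca; case: (c \in T) => //.
  by rewrite in_setU1 eq_sym (negPf ca) aT mulr0.
transitivity (sg T a * sg T a * B b a * g T); first by ring.
by rewrite sg_sq mul1r.
Qed.

Lemma cpcpE a b g T : cp a (cp b g) T = \sum_(c : I) \sum_(d : I)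
  (if c \in T then 0 else if d \in c |: T then 0 else
     sg T c * B a c * (sg (c |: T) d * B b d * g (d |: (c |: T)))).
Proof.
rewrite /cp; apply: eq_bigr => c _; case: (c \in T); first by rewrite big1.
by rewrite mulr_sumr; apply: eq_bigr => d _; case: (d \in c |: T); rewrite ?mulr0.
Qed.

Lemma CC a b g T : cp a (cp b g) T + cp b (cp a g) T = 0.
Proof.
rewrite !cpcpE [X in _ + X]exchange_big -big_split big1 //= => c _.
rewrite -big_split big1 //= => d _.
case cT: (c \in T); case dT: (d \in T); rewrite ?in_setU1 ?cT ?dT ?orbT ?add0r ?addr0 //=.
case: (eqVneq d c) => [->|dc]; first by rewrite ?eqxx /= ?add0r.
rewrite /= !sgnbU1 ?cT ?dT // setUCA.
set G := g _.
transitivity ((eps c d + eps d c) * (sg T c * sg T d * B a c * B b d * G)); first by ring.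
by rewrite eps_swap ?mul0r // eq_sym.
Qed.

Lemma CCsq a g T : cp a (cp a g) T = 0.
Proof.
rewrite cpcpE big1 //= => c _; rewrite big1 //= => d _.
case: (c \in T) => //; case: (eqVneq d c) => [->|dc]; first by rewrite setU11.
case: (d \in c |: T) => //.
transitivity (B a c * B a d * (sg T c * sg (c |: T) d * g (d |: (c |: T)))); first by ring.
by rewrite Bf_uniq ?mul0r // eq_sym.
Qed.

Lemma WWsq a g T : wp a (wp a g) T = 0.
Proof. by rewrite /wp; case: (a \in T); rewrite ?setD11 ?mulr0. Qed.

End More.

Section Alg.
Variables (R : comPzRingType) (n : nat).
Local Notation I := 'I_(n + n).
Local Notation cl := (cl R n).
Local Notation sg := (sgnb R).
Local Notation B := (Bf R).
Local Notation wp := (@wp R n).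
Local Notation cp := (@cp R n).
Local Notation eps := (@eps R n).

Definition scl (c : R) (y : cl) : cl := [ffun T => c * y T].
Definition eb (S : {set I}) : cl := [ffun T => (T == S)%:R].
Definition FF (S : {set I}) (y : cl) : cl := foldr (@clL R n) y (enum S).

Lemma clL_add a (y z : cl) : clL a (y + z) = clL a y + clL a z.
Proof.
apply/ffunP=> T; rewrite clLE [RHS]ffunE !clLE addrACA.
by rewrite -wpD -cpD; congr (_ + _); [apply: wp_ext | apply: cp_ext] => U; rewrite ffunE.
Qed.

Lemma clL_scl a c (y : cl) : clL a (scl c y) = scl c (clL a y).
Proof.
apply/ffunP=> T; rewrite clLE [RHS]ffunE clLE /wp /cp mulrDr; congr (_ + _).
  by case: (a \in T); rewrite ?ffunE ?mulr0 // mulrCA.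
rewrite mulr_sumr; apply: eq_bigr => c0 _; case: (c0 \in T); rewrite ?mulr0 //.
by rewrite ffunE mulrCA.
Qed.

Lemma clL0 a : clL a (0 : cl) = 0.
Proof.
apply/ffunP=> T; rewrite clLE [RHS]ffunE /wp /cp.
rewrite big1 ?addr0; first by case: (a \in T); rewrite ?ffunE ?mulr0.
by move=> c _; case: (c \in T); rewrite ?ffunE ?mulr0.
Qed.

Lemma clL_sum a (J : Type) (r : seq J) (P : pred J) (f : J -> cl) :
  clL a (\sum_(j <- r | P j) f j) = \sum_(j <- r | P j) clL a (f j).
Proof. exact: (big_morph _ (clL_add a) (clL0 a)). Qed.

Lemma clL_opp a (y : cl) : clL a (- y) = - clL a y.
Proof.
apply/eqP; rewrite -subr_eq0 opprK -clL_add addNr clL0 //.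
Qed.

Lemma scl0 (y : cl) : scl 0 y = 0.
Proof. by apply/ffunP=> T; rewrite !ffunE mul0r. Qed.

Lemma clL_AC a b (y : cl) : clL a (clL b y) + clL b (clL a y) = scl (B a b + B b a) y.
Proof.
apply/ffunP=> T; rewrite [LHS]ffunE !clLLE [RHS]ffunE.
transitivity ((wp a (wp b y) T + wp b (wp a y) T) + (cp a (cp b y) T + cp b (cp a y) T)
  + (wp b (cp a y) T + cp a (wp b y) T) + (wp a (cp b y) T + cp b (wp a y) T)).
  by ring.
by rewrite WW CC !WC !add0r mulrDl.
Qed.

Lemma clL_SQ a (y : cl) : clL a (clL a y) = 0.
Proof.
apply/ffunP=> T; rewrite clLLE [RHS]ffunE WWsq CCsq add0r addr0 WC Bf_refl mul0r //.
Qed.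

Lemma clmul_addL (x1 x2 y : cl) : clmul (x1 + x2) y = clmul x1 y + clmul x2 y.
Proof.
apply/ffunP=> T; rewrite !ffunE -big_split /=; apply: eq_bigr => S _.
by rewrite ffunE mulrDl.
Qed.

Lemma clmul_oppL (x y : cl) : clmul (- x) y = - clmul x y.
Proof.
apply/ffunP=> T; rewrite !ffunE -sumrN; apply: eq_bigr => S _.
by rewrite ffunE mulNr.
Qed.

Lemma clmul_sclL c (x y : cl) : clmul (scl c x) y = scl c (clmul x y).
Proof.
apply/ffunP=> T; rewrite !ffunE mulr_sumr; apply: eq_bigr => S _.
by rewrite ffunE mulrA.
Qed.

Lemma clmul_0L (y : cl) : clmul 0 y = 0.
Proof. by apply/ffunP=> T; rewrite !ffunE big1 // => S _; rewrite ffunE mul0r. Qed.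

Lemma clmul_sumL (J : Type) (r : seq J) (P : pred J) (f : J -> cl) y :
  clmul (\sum_(j <- r | P j) f j) y = \sum_(j <- r | P j) clmul (f j) y.
Proof. exact: (big_morph (fun x => clmul x y) (fun x1 x2 => clmul_addL x1 x2 y) (clmul_0L y)). Qed.

Lemma clmul_eb S y : clmul (eb S) y = FF S y.
Proof.
apply/ffunP=> T; rewrite ffunE (bigD1 S) //= big1 ?addr0; first by rewrite ffunE eqxx mul1r.
by move=> S' /negPf nS; rewrite ffunE nS mul0r.
Qed.

Lemma decomp (z : cl) : z = \sum_(S : {set I}) scl (z S) (eb S).
Proof.
apply/ffunP=> T; rewrite sum_ffunE (bigD1 T) //= big1 ?addr0; first by rewrite !ffunE eqxx mulr1.
by move=> S /negPf nS; rewrite !ffunE eq_sym nS mulr0.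
Qed.

Lemma sg_min (S : {set I}) (t : I) : (forall s, s \in S -> (t < s)%N) -> sg S t = 1.
Proof.
move=> H; rewrite /sgnb (_ : [set s in S | (s < t)%N] = set0) ?cards0 //.
apply/setP=> s; rewrite !inE; apply/negP=> /andP[/H h1 h2].
by move: (ltn_trans h1 h2); rewrite ltnn.
Qed.

Lemma Bf_lt (t c : I) : (t < c)%N -> B t c = 0.
Proof.
move=> tc; rewrite /Bf; case: splitP => i Hi //; case: splitP => j Hj //.
by move: tc; rewrite Hi Hj => h; move: (ltn_trans h (ltn_ord j)); rewrite ltnNge leq_addr.
Qed.

Lemma wedge_min (t : I) (S : {set I}) : (forall s, s \in S -> (t < s)%N) ->
  clL t (eb S) = eb (t |: S).
Proof.
move=> H; have tS : t \notin S by apply/negP=> /H; rewrite ltnn.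
apply/ffunP=> U; rewrite clLE /wp /cp ffunE big1 ?addr0; last first.
  move=> c _; case: (c \in U) => //; rewrite ffunE.
  case: (eqVneq (c |: U) S) => [E|]; last by rewrite mulr0.
  rewrite Bf_lt; first by rewrite mulr0 mul0r.
  by apply: H; rewrite -E setU11.
case: (eqVneq U (t |: S)) => [->|nU].
  by rewrite setU11 setU1K // sgnbU1 // eps_refl mul1r (sg_min H) ffunE !eqxx mulr1.
rewrite ffunE (negPf nU); case: ifP => // tU; case: (eqVneq (U :\ t) S) => [E|]; last by rewrite mulr0.
by move: nU; rewrite -E setD1K // eqxx.
Qed.

Lemma FF_min (t : I) (S : {set I}) (y : cl) : (forall s, s \in S -> (t < s)%N) ->
  FF (t |: S) y = clL t (FF S y).
Proof. by move=> H; rewrite /FF enum_min. Qed.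

End Alg.

Section Q.
Variables (R : comPzRingType) (n : nat).
Local Notation I := 'I_(n + n).
Local Notation cl := (cl R n).
Local Notation sg := (sgnb R).
Local Notation B := (Bf R).
Local Notation scl := (@scl R n).
Local Notation eb := (@eb R n).
Local Notation FF := (@FF R n).

Lemma supp_clL (k : I) (T' S : {set I}) : ~~ (S \subset k |: T') -> clL k (eb T') S = 0.
Proof.
move=> nS; rewrite clLE /wp /cp big1 ?addr0.
  case: ifP => // kS; rewrite ffunE; case: (eqVneq (S :\ k) T') => [E|]; last by rewrite mulr0.
  by move: nS; rewrite -E -{1}(setD1K kS) subxx.
move=> c _; case: (c \in S) => //; rewrite ffunE.
case: (eqVneq (c |: S) T') => [E|]; last by rewrite mulr0.
move: nS; rewrite -E; case/negP; apply/subsetP=> x xS.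
by rewrite !in_setU1 xS !orbT.
Qed.

Lemma low_supp (t : I) (z y : cl) :
  (forall S, z S != 0 -> forall s, s \in S -> (t < s)%N) ->
  clmul (clL t z) y = clL t (clmul z y).
Proof.
move=> H; rewrite [in LHS](decomp z) [in RHS](decomp z) clL_sum !clmul_sumL clL_sum.
apply: eq_bigr => S _; rewrite clL_scl !clmul_sclL clL_scl.
case: (eqVneq (z S) 0) => [->|nz]; first by rewrite !scl0.
by rewrite (@wedge_min R n t S (H S nz)) clmul_eb (@FF_min R n t S _ (H S nz)) clmul_eb.
Qed.

Lemma clL_AC' (a b : I) (y : cl) :
  clL a (clL b y) = scl (B a b + B b a) y - clL b (clL a y).
Proof. by rewrite -clL_AC addrK. Qed.

Lemma Q_basis (k : I) (T : {set I}) (y : cl) :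
  clmul (clL k (eb T)) y = clL k (FF T y).
Proof.
elim: {T}#|T|.+1 {-2}T (ltnSn #|T|) k => // m IH T HT k.
case: (pickP [pred s in T | (s <= k)%N]) => [s0 /andP[s0T s0k] | none]; last first.
  have H : forall s, s \in T -> (k < s)%N.
    by move=> s sT; move: (none s); rewrite /= sT /= => /negbT; rewrite -ltnNge.
  by rewrite wedge_min // clmul_eb FF_min.
case: (arg_minnP (fun s : I => val s) s0T) => t tT tmin.
set T' := T :\ t.
have Ht : forall s, s \in T' -> (t < s)%N.
  move=> s; rewrite in_setD1 => /andP[st sT]; rewrite ltn_neqAle tmin // andbT.
  by apply/negP=> /eqP/val_inj E; move: st; rewrite E eqxx.
have ET : T = t |: T' by rewrite setD1K.
rewrite ET -(@wedge_min R n t T' Ht) (@FF_min R n t T' _ Ht).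
case: (eqVneq k t) => [->|kt]; first by rewrite !clL_SQ clmul_0L.
have tk : (t < k)%N.
  rewrite ltn_neqAle; apply/andP; split; last exact: leq_trans (tmin _ s0T) s0k.
  by apply/negP=> /eqP/val_inj E; move: kt; rewrite E eqxx.
have cT' : (#|T'| < m)%N.
  by move: HT; rewrite ET cardsU1 /T' setD11 add1n ltnS.
rewrite clL_AC' clmul_addL clmul_oppL clmul_sclL clmul_eb low_supp.
  by rewrite IH // [RHS]clL_AC'.
move=> S nz s sS; have : S \subset k |: T'.
  by apply/negPn/negP=> /supp_clL E; move: nz; rewrite E eqxx.
move/subsetP/(_ s sS); rewrite in_setU1 => /orP[/eqP -> //|]; exact: Ht.
Qed.

Lemma clmul_clL (k : I) (z y : cl) : clmul (clL k z) y = clL k (clmul z y).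
Proof.
rewrite [in LHS](decomp z) [in RHS](decomp z) clL_sum !clmul_sumL clL_sum.
apply: eq_bigr => S _; rewrite clL_scl !clmul_sclL clL_scl.
by rewrite Q_basis clmul_eb.
Qed.

End Q.

Lemma sum_antisym (V : zmodType) m (f : 'I_m -> 'I_m -> V) :
  (forall i, f i i = 0) -> (forall i j, f i j + f j i = 0) ->
  \sum_i \sum_j f i j = 0.
Proof.
move=> f0 fs.
have E : forall i, \sum_(j : 'I_m) f i j =
   \sum_(j : 'I_m) (if (j < i)%N then f i j else 0) + \sum_(j : 'I_m) (if (i < j)%N then f i j else 0).
  move=> i; rewrite -big_split /=; apply: eq_bigr => j _.
  case: (ltngtP j i) => h; rewrite ?addr0 ?add0r //.
  by rewrite (val_inj h) f0.
rewrite (eq_bigr _ (fun i _ => E i)) big_split /= [X in _ + X]exchange_big /=.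
rewrite -big_split big1 //= => i _; rewrite -big_split big1 //= => j _.
by case: (j < i)%N; rewrite ?addr0 ?fs.
Qed.

Section Ops.
Variables (R : comPzRingType) (n : nat).
Local Notation I := 'I_(n + n).
Local Notation cl := (cl R n).
Local Notation B := (Bf R).
Local Notation scl := (@scl R n).
Local Notation eb := (@eb R n).
Local Notation FF := (@FF R n).
Local Notation o := (cl1 R n).
Local Notation V := 'rV[R]_(n + n).

Lemma scl_add c (y z : cl) : scl c (y + z) = scl c y + scl c z.
Proof. by apply/ffunP=> T; rewrite !ffunE mulrDr. Qed.
Lemma sclD c d (y : cl) : scl (c + d) y = scl c y + scl d y.
Proof. by apply/ffunP=> T; rewrite !ffunE mulrDl. Qed.
Lemma sclA c d (y : cl) : scl c (scl d y) = scl (c * d) y.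
Proof. by apply/ffunP=> T; rewrite !ffunE mulrA. Qed.
Lemma scl_opp c (y : cl) : scl c (- y) = - scl c y.
Proof. by apply/ffunP=> T; rewrite !ffunE mulrN. Qed.
Lemma sclN c (y : cl) : scl (- c) y = - scl c y.
Proof. by apply/ffunP=> T; rewrite !ffunE mulNr. Qed.
Lemma scl1 (y : cl) : scl 1 y = y.
Proof. by apply/ffunP=> T; rewrite !ffunE mul1r. Qed.
Lemma scl_0 c : scl c 0 = 0.
Proof. by apply/ffunP=> T; rewrite !ffunE mulr0. Qed.
Lemma scl_sumr c (J : Type) (r : seq J) (P : pred J) (f : J -> cl) :
  scl c (\sum_(j <- r | P j) f j) = \sum_(j <- r | P j) scl c (f j).
Proof. by apply/ffunP=> T; rewrite !ffunE !sum_ffunE mulr_sumr; apply: eq_bigr => j _; rewrite ffunE. Qed.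
Lemma scl_suml (J : Type) (r : seq J) (P : pred J) (c : J -> R) (y : cl) :
  \sum_(j <- r | P j) scl (c j) y = scl (\sum_(j <- r | P j) c j) y.
Proof. by apply/ffunP=> T; rewrite !ffunE !sum_ffunE mulr_suml; apply: eq_bigr => j _; rewrite ffunE. Qed.

Definition Lv (h : V) (y : cl) : cl := \sum_(k : I) scl (h 0 k) (clL k y).

Lemma Lv_add h (y z : cl) : Lv h (y + z) = Lv h y + Lv h z.
Proof. by rewrite /Lv -big_split; apply: eq_bigr => k _; rewrite clL_add scl_add. Qed.
Lemma Lv_opp h (y : cl) : Lv h (- y) = - Lv h y.
Proof. by rewrite /Lv -sumrN; apply: eq_bigr => k _; rewrite clL_opp scl_opp. Qed.
Lemma Lv_sub h (y z : cl) : Lv h (y - z) = Lv h y - Lv h z.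
Proof. by rewrite Lv_add Lv_opp. Qed.
Lemma Lv_scl h c (y : cl) : Lv h (scl c y) = scl c (Lv h y).
Proof.
rewrite /Lv scl_sumr; apply: eq_bigr => k _; rewrite clL_scl !sclA mulrC //.
Qed.
Lemma Lv_0 h : Lv h 0 = 0.
Proof. by rewrite /Lv big1 // => k _; rewrite clL0 scl_0. Qed.

Lemma Lv_addv (h1 h2 : V) (y : cl) : Lv (h1 + h2) y = Lv h1 y + Lv h2 y.
Proof. by rewrite /Lv -big_split; apply: eq_bigr => k _; rewrite mxE sclD. Qed.
Lemma Lv_sclv (c : R) (h : V) (y : cl) : Lv (c *: h) y = scl c (Lv h y).
Proof. by rewrite /Lv scl_sumr; apply: eq_bigr => k _; rewrite mxE sclA. Qed.
Lemma Lv_oppv (h : V) (y : cl) : Lv (- h) y = - Lv h y.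
Proof. by rewrite /Lv -sumrN; apply: eq_bigr => k _; rewrite mxE sclN. Qed.

Lemma clmul_Lv h (z y : cl) : clmul (Lv h z) y = Lv h (clmul z y).
Proof.
rewrite /Lv clmul_sumL; apply: eq_bigr => k _.
by rewrite clmul_sclL clmul_clL.
Qed.

Lemma cl1_eb : o = eb set0.
Proof. by apply/ffunP=> T; rewrite !ffunE. Qed.

Lemma clmul_1 (y : cl) : clmul o y = y.
Proof. by rewrite cl1_eb clmul_eb /FF enum_set0. Qed.

Lemma clL_1 (k : I) : clL k o = eb [set k].
Proof. by rewrite cl1_eb wedge_min ?setU0 // => s; rewrite inE. Qed.

Lemma iota_Lv (h : V) : Defs.iota h = Lv h o.
Proof.
apply/ffunP=> T; rewrite ffunE /Lv sum_ffunE; apply: eq_bigr => k _.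
by rewrite ffunE clL_1 ffunE.
Qed.

Definition beta (a b : V) : R := \sum_(i : I) \sum_(j : I) a 0 i * b 0 j * (B i j + B j i).

Lemma Lv_LvE (a b : V) (y : cl) :
  Lv a (Lv b y) = \sum_(i : I) \sum_(j : I) scl (a 0 i * b 0 j) (clL i (clL j y)).
Proof.
rewrite /Lv; apply: eq_bigr => i _; rewrite clL_sum scl_sumr; apply: eq_bigr => j _.
by rewrite clL_scl sclA.
Qed.

Lemma Lv_AC (a b : V) (y : cl) : Lv a (Lv b y) + Lv b (Lv a y) = scl (beta a b) y.
Proof.
rewrite !Lv_LvE [X in _ + X]exchange_big -big_split /= /beta -scl_suml.
apply: eq_bigr => i _; rewrite -big_split /= -scl_suml; apply: eq_bigr => j _.
by rewrite mulrC -scl_add clL_AC sclA.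
Qed.

Lemma Lv_AC' (a b : V) (y : cl) : Lv a (Lv b y) = scl (beta a b) y - Lv b (Lv a y).
Proof. by rewrite -Lv_AC addrK. Qed.

Lemma Lv_SQ (a : V) (y : cl) : (forall i j, a 0 i * a 0 j * (B i j + B j i) = 0) ->
  Lv a (Lv a y) = 0.
Proof.
move=> H; rewrite Lv_LvE; apply: sum_antisym => [i|i j].
  by rewrite clL_SQ scl_0.
by rewrite [a 0 j * _]mulrC -scl_add clL_AC sclA H scl0.
Qed.

Definition evn (y : cl) := forall S : {set I}, odd #|S| -> y S = 0.
Definition odn (y : cl) := forall S : {set I}, ~~ odd #|S| -> y S = 0.

Lemma clL_par (k : I) (y : cl) b :
  (forall S : {set I}, odd #|S| = b -> y S = 0) ->
  (forall S : {set I}, odd #|S| = ~~ b -> clL k y S = 0).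
Proof.
move=> H S hS; rewrite clLE /wp /cp big1 ?addr0.
  case: ifP => // kS; rewrite H ?mulr0 //.
  by move: hS; rewrite (cardsD1 k S) kS oddD /= => /negbRL; rewrite negbK.
move=> c _; case: ifP => // cS; rewrite H ?mulr0 //.
by move: hS; rewrite cardsU1 cS oddD /= => ->; rewrite negbK.
Qed.

Lemma Lv_par (h : V) (y : cl) b :
  (forall S : {set I}, odd #|S| = b -> y S = 0) ->
  (forall S : {set I}, odd #|S| = ~~ b -> Lv h y S = 0).
Proof.
move=> H S hS; rewrite /Lv sum_ffunE big1 // => k _.
by rewrite ffunE (@clL_par k y b H S hS) mulr0.
Qed.

Definition GG (S : {set I}) : cl := foldr (@clL R n) o (rev (enum S)).

Lemma clstar_addL (x1 x2 : cl) : clstar (x1 + x2) = clstar x1 + clstar x2.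
Proof.
apply/ffunP=> T; rewrite !ffunE -big_split /=; apply: eq_bigr => S _.
by rewrite ffunE mulrDl.
Qed.
Lemma clstar_oppL (x : cl) : clstar (- x) = - clstar x.
Proof.
apply/ffunP=> T; rewrite !ffunE -sumrN; apply: eq_bigr => S _.
by rewrite ffunE mulNr.
Qed.
Lemma clstar_sclL c (x : cl) : clstar (scl c x) = scl c (clstar x).
Proof.
apply/ffunP=> T; rewrite !ffunE mulr_sumr; apply: eq_bigr => S _.
by rewrite ffunE mulrA.
Qed.
Lemma clstar_0 : clstar (0 : cl) = 0.
Proof. by apply/ffunP=> T; rewrite !ffunE big1 // => S _; rewrite ffunE mul0r. Qed.
Lemma clstar_sumL (J : Type) (r : seq J) (P : pred J) (f : J -> cl) :
  clstar (\sum_(j <- r | P j) f j) = \sum_(j <- r | P j) clstar (f j).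
Proof. exact: (big_morph _ clstar_addL clstar_0). Qed.
Lemma clstar_eb S : clstar (eb S) = GG S.
Proof.
apply/ffunP=> T; rewrite ffunE (bigD1 S) //= big1 ?addr0; first by rewrite ffunE eqxx mul1r.
by move=> S' /negPf nS; rewrite ffunE nS mul0r.
Qed.

Lemma clstar_1 : clstar o = o.
Proof. by rewrite {1}cl1_eb clstar_eb /GG enum_set0. Qed.

Lemma clstar_LL_lt (i j : I) : (i < j)%N -> clstar (clL i (clL j o)) = clL j (clL i o).
Proof.
move=> ij; rewrite clL_1 wedge_min; last by move=> s; rewrite inE => /eqP ->.
rewrite clstar_eb /GG enum_min; last by move=> s; rewrite inE => /eqP ->.
by rewrite enum_set1.
Qed.

Lemma clstar_LL (i j : I) : clstar (clL i (clL j o)) = clL j (clL i o).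
Proof.
case: (ltngtP i j) => h; first exact: clstar_LL_lt.
  rewrite clL_AC' clstar_addL clstar_oppL clstar_sclL clstar_1 clstar_LL_lt //.
  by rewrite [RHS]clL_AC' [B j i + _]addrC.
by rewrite (val_inj h) clL_SQ clstar_0.
Qed.

Lemma clstar_LvLv (a b : V) : clstar (Lv a (Lv b o)) = Lv b (Lv a o).
Proof.
rewrite !Lv_LvE clstar_sumL exchange_big; apply: eq_bigr => i _.
rewrite clstar_sumL; apply: eq_bigr => j _.
by rewrite clstar_sclL clstar_LL mulrC.
Qed.

End Ops.

Section Final.
Variables (R : comPzRingType) (n : nat).
Local Notation I := 'I_(n + n).
Local Notation cl := (cl R n).
Local Notation B := (Bf R).
Local Notation scl := (@scl R n).
Local Notation o := (cl1 R n).
Local Notation V := 'rV[R]_(n + n).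
Local Notation Lv := (@Lv R n).
Local Notation beta := (@beta R n).

Definition dotv (x y : 'rV[R]_n) : R := \sum_(k < n) x 0 k * y 0 k.

Lemma split_l (i : 'I_n) : split (lshift n i) = inl i.
Proof. exact: (unsplitK (inl i)). Qed.
Lemma split_r (i : 'I_n) : split (rshift n i) = inr i.
Proof. exact: (unsplitK (inr i)). Qed.

Lemma Bf_rl (i j : 'I_n) : B (rshift n i) (lshift n j) = (i == j)%:R.
Proof. by rewrite /Bf split_r split_l. Qed.
Lemma Bf_lr (i j : 'I_n) : B (lshift n i) (rshift n j) = 0.
Proof. by rewrite /Bf split_l. Qed.
Lemma Bf_ll (i j : 'I_n) : B (lshift n i) (lshift n j) = 0.
Proof. by rewrite /Bf split_l. Qed.
Lemma Bf_rr (i j : 'I_n) : B (rshift n i) (rshift n j) = 0.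
Proof. by rewrite /Bf split_r split_r. Qed.

Lemma shiftP (i : I) : (exists i', i = lshift n i') \/ (exists i', i = rshift n i').
Proof. by rewrite -(splitK i); case: (split i) => i'; [left|right]; exists i'. Qed.

Lemma sum_delta (F : 'I_n -> R) (i : 'I_n) : \sum_(j < n) F j * (i == j)%:R = F i.
Proof.
rewrite (bigD1 i) //= eqxx mulr1 big1 ?addr0 // => j ji.
by rewrite eq_sym (negPf ji) mulr0.
Qed.

Lemma betaE (a1 b1 a2 b2 : 'rV[R]_n) :
  beta (row_mx a1 b1) (row_mx a2 b2) = dotv b1 a2 + dotv a1 b2.
Proof.
rewrite /beta big_split_ord /= addrC; congr (_ + _); apply: eq_bigr => i _;
  rewrite big_split_ord /=.
- rewrite [X in _ + X]big1 ?addr0; last first.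
    by move=> j _; rewrite !Bf_rr addr0 mulr0.
  rewrite (eq_bigr (fun j => (b1 0 i * a2 0 j) * (i == j)%:R)).
    by rewrite (sum_delta (fun j => b1 0 i * a2 0 j)).
  by move=> j _; rewrite row_mxEr row_mxEl Bf_rl Bf_lr addr0.
- rewrite [X in X + _]big1 ?add0r; last first.
    by move=> j _; rewrite !Bf_ll addr0 mulr0.
  rewrite (eq_bigr (fun j => (a1 0 i * b2 0 j) * (i == j)%:R)).
    by rewrite (sum_delta (fun j => a1 0 i * b2 0 j)).
  by move=> j _; rewrite row_mxEl row_mxEr Bf_lr Bf_rl add0r eq_sym.
Qed.

Lemma beta0 (a b : V) : (forall i j, a 0 i * b 0 j * (B i j + B j i) = 0) -> beta a b = 0.
Proof. by move=> H; rewrite /beta big1 // => i _; rewrite big1. Qed.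

Lemma rl0 (u : 'rV[R]_n) i' : (row_mx 0 u : V) 0 (lshift n i') = 0 :> R.
Proof. by rewrite row_mxEl mxE. Qed.

Lemma ff_iso (u w : 'rV[R]_n) (i j : I) :
  (row_mx 0 u : V) 0 i * (row_mx 0 w : V) 0 j * (B i j + B j i) = 0.
Proof.
case: (shiftP i) => [[i' ->]|[i' ->]]; case: (shiftP j) => [[j' ->]|[j' ->]];
  rewrite ?rl0 ?mulr0 ?mul0r //.
by rewrite !Bf_rr addr0 mulr0.
Qed.

Variables (u w : 'rV[R]_n).
Let P : V := row_mx 0 u.
Let Q : V := row_mx 0 w.
Let N : cl := Lv P (Lv Q o).
Definition xx : cl := o + N.
Definition xi : cl := o - N.

Lemma PP y : Lv P (Lv P y) = 0.
Proof. by apply: Lv_SQ => i j; apply: ff_iso. Qed.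
Lemma QQ y : Lv Q (Lv Q y) = 0.
Proof. by apply: Lv_SQ => i j; apply: ff_iso. Qed.
Lemma QP y : Lv Q (Lv P y) = - Lv P (Lv Q y).
Proof. by rewrite Lv_AC' beta0 ?scl0 ?sub0r // => i j; apply: ff_iso. Qed.

Lemma PQPQ y : Lv P (Lv Q (Lv P (Lv Q y))) = 0.
Proof. by rewrite QP Lv_opp PP oppr0. Qed.

Lemma QN : Lv Q N = 0.
Proof. by rewrite /N QP QQ Lv_0 oppr0. Qed.
Lemma PN : Lv P N = 0.
Proof. by rewrite /N PP. Qed.

Lemma clmul_N y : clmul N y = Lv P (Lv Q y).
Proof. by rewrite /N !clmul_Lv clmul_1. Qed.

Lemma PQxi : Lv P (Lv Q xi) = N.
Proof. by rewrite /xi !Lv_sub QN Lv_0 !subr0. Qed.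

Lemma xx_xi : clmul xx xi = o.
Proof.
rewrite /xx clmul_addL clmul_1 clmul_N PQxi /xi.
by rewrite -addrA addNr addr0.
Qed.

Lemma xi_xx : clmul xi xx = o.
Proof.
rewrite /xi clmul_addL clmul_oppL clmul_1 clmul_N /xx !Lv_add PQPQ addr0.
by rewrite -/N addrK.
Qed.

Lemma star_xx : clstar xx = xi.
Proof.
rewrite /xx clstar_addL clstar_1 /N clstar_LvLv QP.
by [].
Qed.

Lemma even_xx : cl_even xx.
Proof.
move=> S oS; rewrite /xx ffunE.
have e1 : forall S0 : {set I}, odd #|S0| = true -> o S0 = 0.
  move=> S0 h; rewrite ffunE; case: eqP => // E; by move: h; rewrite E cards0.
have e2 := Lv_par Q e1.
have e3 := Lv_par P e2.
by rewrite e1 // e3 // addr0.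
Qed.

Lemma conj_id (h : V) y : Lv P (Lv Q (Lv h y)) =
  Lv h (Lv P (Lv Q y)) - scl (beta P h) (Lv Q y) + scl (beta Q h) (Lv P y).
Proof.
rewrite (Lv_AC' Q h) Lv_sub Lv_scl (Lv_AC' P h).
by rewrite opprB addrC.
Qed.

Lemma conjE (h : V) : clmul (clmul xx (Defs.iota h)) xi =
  Defs.iota (h + beta Q h *: P - beta P h *: Q).
Proof.
rewrite !iota_Lv /xx clmul_addL clmul_1 clmul_N clmul_addL !clmul_Lv clmul_1.
rewrite conj_id PQxi.
have -> : Lv Q xi = Lv Q o by rewrite /xi Lv_sub QN subr0.
have -> : Lv P xi = Lv P o by rewrite /xi Lv_sub PN subr0.
rewrite Lv_addv Lv_oppv !Lv_sclv Lv_addv /xi Lv_sub.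
by rewrite Lv_sclv !addrA subrK addrAC.
Qed.

End Final.

Section Mat.
Variables (R : comPzRingType) (n : nat).
Local Notation I := 'I_(n + n).
Local Notation V := 'rV[R]_(n + n).

Definition Up (A : 'M[R]_n) : 'M[R]_(n + n) := block_mx 1%:M A 0 1%:M.

Lemma Up_mul A C : Up A *m Up C = Up (A + C).
Proof.
rewrite /Up mulmx_block !mul1mx !mulmx1 !mul0mx !mulmx0 !addr0 !add0r.
by rewrite addrC.
Qed.

Lemma Up0 : Up 0 = 1%:M.
Proof. by rewrite /Up [RHS]scalar_mx_block. Qed.

Lemma EO_mul (g h : 'M[R]_(n + n)) : EO g -> EO h -> EO (g *m h).
Proof.
move=> Eg; elim=> [|h' i j l ij _ IH]; first by rewrite mulmx1.
by rewrite mulmxA; apply: EO_step.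
Qed.

Lemma EOgen_Up (i j : 'I_n) c :
  EOgen (lshift n i) (rshift n j) c = Up (c *: (delta_mx i j - delta_mx j i)).
Proof.
rewrite /EOgen /dd split_r split_l.
apply/matrixP => a b; case: (shiftP a) => [[a' ->]|[a' ->]];
  case: (shiftP b) => [[b' ->]|[b' ->]];
  rewrite /Up ?block_mxEul ?block_mxEur ?block_mxEdl ?block_mxEdr !mxE
    ?(inj_eq (@lshift_inj _ _)) ?(inj_eq (@rshift_inj _ _)) ?eq_lrshift ?eq_rlshift /=.
all: by rewrite ?andbF ?subrr ?mulr0 ?addr0 ?add0r ?mxE.
Qed.

Lemma EO_Up_gen (i j : 'I_n) c : EO (Up (c *: (delta_mx i j - delta_mx j i))).
Proof.
rewrite -EOgen_Up -[EOgen _ _ _]mul1mx; apply: EO_step; last exact: EO_one.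
by rewrite eq_lrshift.
Qed.

Definition Amat (u w : 'rV[R]_n) : 'M[R]_n := w^T *m u - u^T *m w.

Lemma Amat_sum (u w : 'rV[R]_n) : Amat u w =
  \sum_(i < n) \sum_(j < n) (w 0 i * u 0 j) *: (delta_mx i j - delta_mx j i).
Proof.
have E : forall (x y : 'rV[R]_n) i j, (x^T *m y) i j = x 0 i * y 0 j.
  by move=> x y i j; rewrite !mxE big_ord1 !mxE.
rewrite /Amat (matrix_sum_delta (w^T *m u)) (matrix_sum_delta (u^T *m w)).
rewrite [X in _ - X]exchange_big -sumrB; apply: eq_bigr => i _.
rewrite -sumrB; apply: eq_bigr => j _.
by rewrite !E scalerBr [u 0 j * _]mulrC.
Qed.

Lemma EO_Up_sum (u w : 'rV[R]_n) : EO (Up (Amat u w)).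
Proof.
have Hc : forall A C, EO (Up A) -> EO (Up C) -> EO (Up (A + C)).
  by move=> A C hA hC; rewrite -Up_mul; apply: EO_mul.
have H0 : EO (Up 0) by rewrite Up0; exact: EO_one.
rewrite Amat_sum; apply: (big_ind (fun A => EO (Up A))) => // i _.
apply: (big_ind (fun A => EO (Up A))) => // j _.
exact: EO_Up_gen.
Qed.

Lemma mulUp (p r : 'rV[R]_n) A : row_mx p r *m Up A = row_mx p (p *m A + r).
Proof. by rewrite /Up mul_row_block !mulmx1 !mulmx0 !addr0. Qed.

Lemma rowdot (p q : 'rV[R]_n) : p *m q^T = (dotv p q)%:M.
Proof.
apply/matrixP=> i j; rewrite !ord1 !mxE /dotv /=; apply: eq_bigr => k _.
by rewrite !mxE.
Qed.

Lemma dotvC (p q : 'rV[R]_n) : dotv p q = dotv q p.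
Proof. by apply: eq_bigr => k _; rewrite mulrC. Qed.

Lemma dotv0 (r : 'rV[R]_n) : dotv 0 r = 0.
Proof. by rewrite /dotv big1 // => k _; rewrite mxE mul0r. Qed.

Lemma tauE (u w p r : 'rV[R]_n) :
  let h : V := row_mx p r in
  h + beta (row_mx 0 w) h *: (row_mx 0 u : V) - beta (row_mx 0 u) h *: (row_mx 0 w : V)
  = h *m Up (Amat u w).
Proof.
rewrite /= mulUp !betaE !dotv0 !addr0 !scale_row_mx !scaler0 opp_row_mx !add_row_mx.
rewrite oppr0 !addr0 /Amat mulmxBr !mulmxA !rowdot !mul_scalar_mx.
rewrite [dotv w p]dotvC [dotv u p]dotvC; congr row_mx.
by rewrite [RHS]addrC addrA.
Qed.


End Mat.

Lemma dotvB (R : comPzRingType) n (p a b : 'rV[R]_n) : dotv p (a - b) = dotv p a - dotv p b.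
Proof. by rewrite /dotv -sumrB; apply: eq_bigr => k _; rewrite !mxE mulrBr. Qed.

Lemma qformE (R : comPzRingType) n (v w : 'rV[R]_n) : qform (row_mx v w) = dotv v w.
Proof.
rewrite /qform row_mxKl row_mxKr !mxE /dotv; apply: eq_bigr => k _.
by rewrite mxE.
Qed.

Lemma conj_all (R : comPzRingType) n (u w : 'rV[R]_n) (h : 'rV[R]_(n + n)) :
  clmul (clmul (xx u w) (Defs.iota h)) (xi u w) = Defs.iota (h *m Up (Amat u w)).
Proof. by rewrite conjE -[h]hsubmxK tauE. Qed.

Unset Implicit Arguments.
Set Strict Implicit.

Theorem theorem4p3 (R : comPzRingType) (n : nat) (v w1 w2 : 'rV[R]_n) :
  (3 <= n)%N ->
  qform (row_mx v w1) = 1 -> qform (row_mx v w2) = 1 ->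
  EO_orbit (row_mx v w1) (row_mx v w2) /\ Epin_orbit (row_mx v w1) (row_mx v w2).
Proof.
move=> _; rewrite !qformE => q1 q2.
set u := w2 - w1.
have qu : dotv v u = 0 by rewrite dotvB q1 q2 subrr.
have key : row_mx v w1 *m Up (Amat u w1) = row_mx v w2.
  rewrite mulUp /Amat mulmxBr !mulmxA !rowdot !mul_scalar_mx q1 qu scale1r scale0r subr0.
  by rewrite /u subrK.
split.
  by exists (Up (Amat u w1)); [exact: EO_Up_sum | rewrite key].
exists (xx u w1), (xi u w1); split; last by rewrite conj_all key.
split; last first.
  by exists (Up (Amat u w1)); [exact: EO_Up_sum | move=> h; rewrite conj_all].
split.
- exact: even_xx.
- by rewrite star_xx xx_xi.
- by split; [exact: xx_xi | exact: xi_xx].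
- by move=> h; exists (h *m Up (Amat u w1)); rewrite conj_all.
- move=> h'; exists (h' *m Up (- Amat u w1)).
  by rewrite conj_all -mulmxA Up_mul addNr Up0 mulmx1.
Qed.
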